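(* Consider the distributed computing problem described in the context with $N$ files and $Q$ Reduce functions, and fix a number of servers $K$, a Map assignment $\boldsymbol{\mathcal M}=(\mathcal M_1,\ldots,\mathcal M_K)$ and a Reduce assignment $\boldsymbol{\mathcal W}=(\mathcal W_1,\ldots,\mathcal W_K)$. For integers $s,d$, let $a_{s,d}$ be the number of intermediate values $v_{q,n}$ that are available at exactly $s$ servers and required by (but not available at) exactly $d$ servers; here $v_{q,n}$ is available at server $k$ if $n\in\mathcal M_k$, and required by server $k$ if $q\in\mathcal W_k$. Then every valid shuffling scheme has communication load \[ L\ \ge\ \frac{1}{QN}\sum_{s=1}^{K}\sum_{d=1}^{K-s}a_{s,d}\,\frac{d}{s+d-1}. \]
   Context: Problem: given $N$ input files $w_1,\ldots,w_N\in\mathbb{F}_{2^F}$, compute $Q$ output functions $\phi_q(w_1,\ldots,w_N)=h_q(g_{q,1}(w_1),\ldots,g_{q,N}(w_N))$, $q\in\{1,\ldots,Q\}$, where the Map function $\vec g_n=(g_{1,n},\ldots,g_{Q,n})$ maps file $w_n$ to $Q$ intermediate values $v_{q,n}=g_{q,n}(w_n)\in\mathbb{F}_{2^T}$ and $h_q$ is a function of $(v_{q,1},\ldots,v_{q,N})$. With $K$ servers, the Map assignment satisfies $\mathcal M_k\subseteq\{1,\ldots,N\}$, $\bigcup_k\mathcal M_k=\{1,\ldots,N\}$ (server $k$ computes $\vec g_n(w_n)$ for all $n\in\mathcal M_k$); the Reduce assignment $\mathcal W_1,\ldots,\mathcal W_K$ is a partition of $\{1,\ldots,Q\}$ into pairwise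 disjoint, possibly empty sets (server $k$ computes $h_q$ for $q\in\mathcal W_k$). A shuffling scheme: each server $k$ sends a message $X_k=\psi_k(\{\vec g_n:n\in\mathcal M_k\})$, a function of its locally computed intermediate values, multicast to a subset of the other servers. It is valid if, for every possible realization of the intermediate values, each server $k$ can decode all $v_{q,n}$ with $q\in\mathcal W_k$ from its locally computed intermediate values and the messages $X_1,\ldots,X_K$. The communication load $L$ is the total number of bits sent by all servers, divided by $QNT$. *)

(* Defs.v *)
From HB Require Import structures.
From mathcomp Require Import all_boot all_order all_algebra.
Set Implicit Arguments. Unset Strict Implicit. Unset Printing Implicit Defensive.
Import Order.TTheory GRing.Theory Num.Theory.

(* An element of F_{2^T}, viewed as a string of T bits. *)
Definition bits (T : nat) := 'I_T -> bool.
Definition bits0 (T : nat) : bits T := fun _ : 'I_T => false.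
Arguments bits0 : clear implicits.

Definition realization (Q N T : nat) := 'I_Q -> 'I_N -> bits T.

(* The intermediate values computed locally at server k (those v_{q,n} with
   n \in M_k); other entries are blanked out with a fixed default. *)
Definition local (K Q N T : nat) (M : 'I_K -> {set 'I_N}) (k : 'I_K)
    (v : realization Q N T) : realization Q N T :=
  fun q n => if n \in M k then v q n else bits0 T.

Arguments local {K Q N T} M k v.

Definition map_assignment (K N : nat) (M : 'I_K -> {set 'I_N}) : Prop :=
  \bigcup_(k < K) M k = [set: 'I_N].

Definition reduce_assignment (K Q : nat) (W : 'I_K -> {set 'I_Q}) : Prop :=
  (forall k k' : 'I_K, k != k' -> [disjoint W k & W k']) /\
  \bigcup_(k < K) W k = [set: 'I_Q].

(* A shuffling scheme: server k sends a message of len k bits,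
   X_k = enc k (local values of k), multicast to the servers in recv k. *)
Record shuffle_scheme (K Q N T : nat) := ShuffleScheme {
  len  : 'I_K -> nat;
  enc  : forall k : 'I_K, realization Q N T -> bits (len k);
  recv : 'I_K -> {set 'I_K}
}.
Arguments len {K Q N T} s k.
Arguments enc {K Q N T} s k v _.
Arguments recv {K Q N T} s k.

Definition received (K Q N T : nat) (M : 'I_K -> {set 'I_N})
    (S : shuffle_scheme K Q N T) (k : 'I_K) (v : realization Q N T) :
    forall k' : 'I_K, bits (len S k') :=
  fun k' => if k \in recv S k' then enc S k' (local M k' v) else bits0 (len S k').
Arguments received {K Q N T} M S k v k'.

Definition valid_scheme (K Q N T : nat) (M : 'I_K -> {set 'I_N})
    (W : 'I_K -> {set 'I_Q}) (S : shuffle_scheme K Q N T) : Prop :=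
  exists dec : forall k : 'I_K, realization Q N T ->
                 (forall k' : 'I_K, bits (len S k')) -> 'I_Q -> 'I_N -> bits T,
    forall (k : 'I_K) (v : realization Q N T) (q : 'I_Q) (n : 'I_N),
      q \in W k -> dec k (local M k v) (received M S k v) q n = v q n.

Definition load (R : realFieldType) (K Q N T : nat) (S : shuffle_scheme K Q N T) : R :=
  ((\sum_(k < K) len S k)%N)%:R / (Q * N * T)%N%:R.

Definition a_sd (K Q N : nat) (M : 'I_K -> {set 'I_N}) (W : 'I_K -> {set 'I_Q})
    (s d : nat) : nat :=
  #|[set qn : 'I_Q * 'I_N |
      (#|[set k : 'I_K | qn.2 \in M k]| == s) &&
      (#|[set k : 'I_K | (qn.1 \in W k) && (qn.2 \notin M k)]| == d)]|.
Arguments valid_scheme {K Q N T} M W S.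
Arguments load {R K Q N T} S.
Arguments a_sd {K Q N} M W s d.

(* Main.v *)
Require Import Defs.
From HB Require Import structures.
From mathcomp Require Import all_boot all_order all_algebra.
From mathcomp Require Import reals exp.
From mathcomp Require Import ring lra.
From mathcomp Require boolp.
From mathcomp Require Rstruct.
Set Implicit Arguments. Unset Strict Implicit. Unset Printing Implicit Defensive.
Import Order.TTheory GRing.Theory Num.Theory.
Local Open Scope ring_scope.

Section Entropy.
Variables (R : realType) (Om : finType).

Definition wc {X : eqType} (f : Om -> X) (w : Om) : R :=
  \sum_(x : Om) ((f x == f w)%:R).
Definition Ls {X : eqType} (f : Om -> X) : R := \sum_w ln (wc f w).
Definition J {X Y : eqType} (f : Om -> X) (g : Om -> Y) := fun w => (f w, g w).
Definition Hc {X Y : eqType} (f : Om -> X) (g : Om -> Y) : R := Ls g - Ls (J f g).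
Definition keq {X Y : eqType} (f : Om -> X) (g : Om -> Y) :=
  forall x y, (f x == f y) = (g x == g y).

Lemma wc_ge1 {X : eqType} (f : Om -> X) w : 1 <= wc f w.
Proof.
rewrite /wc (bigD1 w) //= eqxx lerDl; apply: sumr_ge0 => i _; exact: ler0n.
Qed.

Lemma wc_gt0 {X : eqType} (f : Om -> X) w : 0 < wc f w.
Proof. exact: lt_le_trans ltr01 (wc_ge1 f w). Qed.

Lemma wc_pos {X : eqType} (f : Om -> X) w : wc f w \is Num.pos.
Proof. by rewrite posrE wc_gt0. Qed.

Lemma wc_val {X : eqType} (f : Om -> X) w w' : f w = f w' -> wc f w = wc f w'.
Proof. by move=> e; rewrite /wc; apply: eq_bigr => x _; rewrite e. Qed.

Lemma wc_keq {X Y : eqType} (f : Om -> X) (g : Om -> Y) : keq f g -> wc f =1 wc g.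
Proof. by move=> h w; rewrite /wc; apply: eq_bigr => x _; rewrite h. Qed.

Lemma Ls_keq {X Y : eqType} (f : Om -> X) (g : Om -> Y) : keq f g -> Ls f = Ls g.
Proof. by move=> h; rewrite /Ls; apply: eq_bigr => w _; rewrite (wc_keq h). Qed.

Lemma keqJ {X Y : eqType} (f : Om -> X) (g : Om -> Y) x y :
  (J f g x == J f g y) = (f x == f y) && (g x == g y).
Proof. by rewrite /J xpair_eqE. Qed.

Lemma Hc_keq {X Y X' Y' : eqType} (f : Om -> X) (g : Om -> Y) (f' : Om -> X') (g' : Om -> Y') :
  keq (J f g) (J f' g') -> keq g g' -> Hc f g = Hc f' g'.
Proof. by move=> h1 h2; rewrite /Hc (Ls_keq h1) (Ls_keq h2). Qed.

Lemma wc_le {X Y : eqType} (f : Om -> X) (g : Om -> Y) w :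
  (forall x y, f x = f y -> g x = g y) -> wc f w <= wc g w.
Proof.
move=> h; rewrite /wc; apply: ler_sum => x _.
case: eqP => [/h -> |_]; rewrite ?eqxx ?ler0n //.
Qed.

Lemma Ls_le {X Y : eqType} (f : Om -> X) (g : Om -> Y) :
  (forall x y, f x = f y -> g x = g y) -> Ls f <= Ls g.
Proof.
move=> h; rewrite /Ls; apply: ler_sum => w _.
by rewrite ler_ln ?wc_pos // wc_le.
Qed.

Lemma Hc_ge0 {X Y : eqType} (f : Om -> X) (g : Om -> Y) : 0 <= Hc f g.
Proof.
rewrite /Hc subr_ge0; apply: Ls_le => x y; rewrite /J; by case=> _ ->.
Qed.

Lemma Hc_chain {X1 X2 Y : eqType} (f1 : Om -> X1) (f2 : Om -> X2) (g : Om -> Y) :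
  Hc (J f1 f2) g = Hc f1 g + Hc f2 (J f1 g).
Proof.
rewrite /Hc (@Ls_keq _ _ (J (J f1 f2) g) (J f2 (J f1 g))); first by rewrite addrA subrK.
by move=> x y; rewrite !keqJ andbA [(f2 x == f2 y) && _]andbC.
Qed.

Lemma ln_le_sub1 (x : R) : 0 < x -> ln x <= x - 1.
Proof.
move=> x0; have := @le_ln1Dx R (x - 1); rewrite [1 + _]addrC subrK; apply.
lra.
Qed.

Lemma sum_inv_wc {Z : eqType} (h : Om -> Z) (z : Z) :
  \sum_w ((h w == z)%:R / wc h w) <= 1.
Proof.
set m := \sum_x ((h x == z)%:R : R).
have E : \sum_w ((h w == z)%:R / wc h w) = \sum_w ((h w == z)%:R / m).
  apply: eq_bigr => w _; case: eqP => [e|_]; last by rewrite !mul0r.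
  by rewrite /wc /m; congr (_ / _); apply: eq_bigr => x _; rewrite e.
rewrite E -mulr_suml -/m.
have [->|m0] := eqVneq m 0; first by rewrite mul0r ler01.
by rewrite mulfV.
Qed.

Lemma term_le {A B C : eqType} (a : Om -> A) (b : Om -> B) (c : Om -> C) x y w :
 b y = b x ->
 (J a b x == J a b w)%:R * (J b c y == J b c w)%:R / (wc (J a (J b c)) w * wc b w)
 <= ((J a (J b c) w == (a x, (b x, c y)))%:R / wc (J a (J b c)) w) / wc b x.
Proof.
move=> e.
have H0 : forall t : bool, 0 <= ((t%:R : R) / wc (J a (J b c)) w) / wc b x.
  by move=> t; rewrite !divr_ge0 ?ler0n ?ltW ?wc_gt0.
rewrite /J !xpair_eqE.
case: (eqVneq (a x) (a w)) => [ea|na] /=; last by rewrite !mul0r ?mulr0 ?H0 ?lexx.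
case: (eqVneq (b x) (b w)) => [eb|nb] /=; last by rewrite !mul0r ?mulr0 ?H0 ?lexx.
case: (eqVneq (c y) (c w)) => [ec|nc] /=; last by rewrite andbF !mulr0 !mul0r ?H0 ?lexx.
rewrite e eb eqxx /= (@wc_val _ b w x) ?eb //.
by rewrite !mul1r invfM lexx.
Qed.

Lemma submod {A B C : eqType} (a : Om -> A) (b : Om -> B) (c : Om -> C) :
  Ls (J a b) + Ls (J b c) <= Ls (J a (J b c)) + Ls b.
Proof.
have key : \sum_w (wc (J a b) w * wc (J b c) w / (wc (J a (J b c)) w * wc b w)) <= #|Om|%:R.
  have -> : \sum_w (wc (J a b) w * wc (J b c) w / (wc (J a (J b c)) w * wc b w)) =
     \sum_w \sum_x \sum_y ((J a b x == J a b w)%:R * (J b c y == J b c w)%:R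
                              / (wc (J a (J b c)) w * wc b w)).
    apply: eq_bigr => w _; rewrite /wc -mulrA mulr_suml; apply: eq_bigr => x _.
    rewrite mulr_suml mulr_sumr; apply: eq_bigr => y _.
    by rewrite mulrA.
  rewrite exchange_big /=.
  under eq_bigr do rewrite exchange_big /=.
  have -> : (#|Om|%:R : R) = \sum_x \sum_y ((b y == b x)%:R / wc b x).
    rewrite -sum1_card natr_sum; apply: eq_bigr => x _.
    by rewrite -mulr_suml mulfV // gt_eqF // wc_gt0.
  apply: ler_sum => x _; apply: ler_sum => y _.
  have [e|ne] := eqVneq (b y) (b x).
    rewrite (_ : (true%:R : R) = 1) // mul1r.
    apply: le_trans (_ : \sum_w (((J a (J b c) w == (a x, (b x, c y)))%:R / wc (J a (J b c)) w) / wc b x) <= _).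
      by apply: ler_sum => w _; apply: term_le.
    rewrite -mulr_suml -[X in _ <= X]mul1r ler_pM2r ?invr_gt0 ?wc_gt0 //; exact: sum_inv_wc.
  rewrite (_ : (false%:R : R) = 0) // mul0r big1 // => w _.
  rewrite /J !xpair_eqE.
  case: (eqVneq (b x) (b w)) => [eb|nb]; last by rewrite andbF !mul0r.
  case: (eqVneq (b y) (b w)) => [eb'|nb]; last by rewrite andFb mulr0 mul0r.
  by move: ne; rewrite eb eb' eqxx.
have -> : Ls (J a b) + Ls (J b c) = Ls (J a (J b c)) + Ls b +
   \sum_w (ln (wc (J a b) w) + ln (wc (J b c) w) - (ln (wc (J a (J b c)) w) + ln (wc b w))).
  rewrite sumrB !big_split /= /Ls; lra.
rewrite -lerBrDl subrr.
apply: le_trans (_ : \sum_w (wc (J a b) w * wc (J b c) w / (wc (J a (J b c)) w * wc b w) - 1) <= _).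
  apply: ler_sum => w _.
  rewrite -!lnM ?wc_pos // -ln_div ?posrE ?mulr_gt0 ?wc_gt0 //.
  by apply: ln_le_sub1; rewrite divr_gt0 ?mulr_gt0 ?wc_gt0.
by rewrite sumrB sumr_const subr_le0.
Qed.

Lemma Hc_mono {X Y Z : eqType} (f : Om -> X) (g : Om -> Y) (h : Om -> Z) :
  Hc f (J g h) <= Hc f g.
Proof.
rewrite /Hc; have := submod f g h; lra.
Qed.

Lemma Hc_det {X Y : eqType} (f : Om -> X) (g : Om -> Y) :
  (forall x y, g x = g y -> f x = f y) -> Hc f g = 0.
Proof.
move=> h; rewrite /Hc (@Ls_keq _ _ (J f g) g) ?subrr // => x y.
rewrite keqJ; case: (eqVneq (g x) (g y)) => [e|ne].
  by rewrite (h _ _ e) !eqxx.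
by rewrite andbF.
Qed.

Lemma Hc_const {X Y Z : eqType} (f : Om -> X) (g : Om -> Y) (y0 : Z) :
  Hc f g <= Hc f (fun _ => y0).
Proof.
rewrite (@Hc_keq _ _ _ _ f g f (J (fun _ => y0) g)); first exact: Hc_mono.
  by move=> x y; rewrite !keqJ eqxx.
by move=> x y; rewrite keqJ eqxx.
Qed.

Lemma sum_inv_wc_card {Y : finType} (f : Om -> Y) :
  \sum_w (wc f w)^-1 <= #|Y|%:R.
Proof.
have -> : \sum_w (wc f w)^-1 = \sum_w \sum_(y : Y) ((f w == y)%:R / wc f w).
  apply: eq_bigr => w _; rewrite -mulr_suml (bigD1 (f w)) //= eqxx big1 ?addr0 ?mul1r //.
  by move=> y /negPf; rewrite eq_sym => ->.
rewrite exchange_big /= -sum1_card natr_sum; apply: ler_sum => y _.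
exact: sum_inv_wc.
Qed.

Lemma Hc_range {X : eqType} {Y : finType} (f : Om -> Y) (g : Om -> X) :
  Hc f g <= #|Om|%:R * ln (#|Y|%:R).
Proof.
case: (pickP (fun _ : Om => true)) => [w0 _|h0]; last first.
  rewrite /Hc /Ls !big_pred0 // ?subrr ?mul0r ?card0 //.
  have -> : #|Om| = 0%N by apply: eq_card0 => x; move: (h0 x).
  by rewrite mul0r.
have Y0 : (0 < #|Y|)%N by apply/card_gt0P; exists (f w0).
apply: (le_trans (Hc_const f g tt)).
rewrite /Hc (@Ls_keq _ _ (J f (fun _ => tt)) f); last by move=> x y; rewrite keqJ eqxx andbT.
have -> : Ls (fun _ : Om => tt) = \sum_(w : Om) ln (#|Om|%:R).
  apply: eq_bigr => w _; congr ln; rewrite /wc -sum1_card natr_sum.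
  by apply: eq_bigr.
rewrite /Ls -sumrB.
apply: le_trans (_ : \sum_w ((#|Om|%:R / (#|Y|%:R * wc f w) - 1) + ln (#|Y|%:R)) <= _).
  apply: ler_sum => w _.
  have Om0 : (0 : R) < #|Om|%:R by rewrite ltr0n; apply/card_gt0P; exists w0.
  have Y0' : (0 : R) < #|Y|%:R by rewrite ltr0n.
  rewrite -lerBlDr -ln_div ?posrE ?wc_gt0 // -ln_div ?posrE ?divr_gt0 ?wc_gt0 //.
  rewrite -mulrA -invfM (mulrC (wc f w)); apply: ln_le_sub1.
  apply: divr_gt0 => //; apply: mulr_gt0 => //; exact: wc_gt0.
have S1 : \sum_w (#|Om|%:R / (#|Y|%:R * wc f w)) = #|Om|%:R / #|Y|%:R * \sum_w (wc f w)^-1.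
  by rewrite mulr_sumr; apply: eq_bigr => w _; rewrite invfM mulrA.
have S3 : #|Om|%:R / #|Y|%:R * \sum_w (wc f w)^-1 <= #|Om|%:R.
  apply: le_trans (ler_wpM2l _ (sum_inv_wc_card f)) _.
    apply: divr_ge0; exact: ler0n.
  rewrite divfK //; rewrite pnatr_eq0 -lt0n; exact: Y0.
rewrite big_split sumrB S1 /=.
have E1 : \sum_(i : Om) (1:R) = #|Om|%:R by rewrite sumr_const.
have E2 : \sum_(i : Om) ln (#|Y|%:R : R) = #|Om|%:R * ln #|Y|%:R by rewrite sumr_const mulr_natl.
rewrite E1 E2; lra.
Qed.
Lemma Hc_subadd {I : Type} {X Y : eqType} (F : I -> Om -> X) (g : Om -> Y) (s : seq I) :
  Hc (fun w => [seq F k w | k <- s]) g <= \sum_(k <- s) Hc (F k) g.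
Proof.
elim: s => [|k s IH].
  by rewrite big_nil Hc_det.
rewrite big_cons.
rewrite (@Hc_keq _ _ _ _ _ g (J (F k) (fun w => [seq F k w | k <- s])) g); first last.
- by [].
- by move=> x y; rewrite !keqJ /= eqseq_cons.
rewrite Hc_chain; apply: lerD => //; apply: le_trans _ IH.
rewrite (@Hc_keq _ _ _ _ _ (J (F k) g) (fun w => [seq F k w | k <- s]) (J g (F k))); first exact: Hc_mono.
  by move=> x y; rewrite !keqJ [(F k x == _) && _]andbC.
by move=> x y; rewrite !keqJ andbC.
Qed.

End Entropy.


Section Setup.
Variables (R : realType) (K Q N T : nat) (M : 'I_K -> {set 'I_N}) (W : 'I_K -> {set 'I_Q})
  (sch : shuffle_scheme K Q N T).
Variable dec : forall k : 'I_K, realization Q N T -> (forall k' : 'I_K, bits (len sch k')) ->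
  'I_Q -> 'I_N -> bits T.
Hypothesis Hdec : forall k v q n, q \in W k ->
  dec k (local M k v) (received M sch k v) q n = v q n.

Local Notation I := ('I_Q * 'I_N)%type.
Local Notation Om := {ffun I -> {ffun 'I_T -> bool}}.

Definition toreal (w : Om) : realization Q N T := fun q n t => w (q, n) t.
Definition tmsg k (w : Om) : {ffun 'I_(len sch k) -> bool} :=
  [ffun i => enc sch k (local M k (toreal w)) i].
Definition msg k (w : Om) : seq bool := tval (fgraph (tmsg k w)).
Definition XS (A : {set 'I_K}) (w : Om) := [seq msg k w | k <- enum A].
Definition proj (C : {set I}) (w : Om) : Om :=
  [ffun i => if i \in C then w i else [ffun=> false]].
Definition Mk k : {set I} := [set i : I | i.2 \in M k].
Definition Wk k : {set I} := [set i : I | i.1 \in W k].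
Definition BS (A : {set 'I_K}) : {set I} := \bigcup_(j | j \notin A) (Mk j :|: Wk j).

Lemma keqP {X Y : eqType} (f : Om -> X) (g : Om -> Y) :
  (forall x y, f x = f y <-> g x = g y) -> keq f g.
Proof. by move=> h x y; apply/eqP/eqP => /h. Qed.

Lemma JP {X Y : eqType} (f : Om -> X) (g : Om -> Y) x y :
  J f g x = J f g y <-> f x = f y /\ g x = g y.
Proof. by rewrite /J; split => [[-> ->]|[-> ->]]. Qed.

Lemma msg_tmsg k : keq (msg k) (tmsg k).
Proof.
apply: keqP => x y; split => [h|e]; last by rewrite /msg e.
by apply: (can_inj fgraphK); apply: val_inj.
Qed.

Lemma XSP (A : {set 'I_K}) (x y : Om) : XS A x = XS A y <-> (forall k, k \in A -> msg k x = msg k y).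
Proof.
rewrite /XS; split.
  move=> h k kA; move: h; rewrite -[enum A]/(enum A).
  have : k \in enum A by rewrite mem_enum.
  elim: (enum A) => //= j s IH; rewrite inE => /orP[/eqP-> | ks] [e1 e2] //.
  exact: IH.
move=> h; apply/eq_in_map => k; rewrite mem_enum; exact: h.
Qed.

Lemma projP (C : {set I}) (x y : Om) : proj C x = proj C y <-> (forall i, i \in C -> x i = y i).
Proof.
split=> [h i iC | h].
  by have := congr1 (fun f : Om => f i) h; rewrite /proj !ffunE iC.
by apply/ffunP => i; rewrite /proj !ffunE; case: ifP => // /h ->.
Qed.

Lemma local_eq k (x y : Om) : (forall i, i \in Mk k -> x i = y i) ->
  local M k (toreal x) = local M k (toreal y).
Proof.
move=> h; apply: boolp.functional_extensionality_dep => q.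
apply: boolp.functional_extensionality_dep => n.
rewrite /local; case: ifP => // nM.
apply: boolp.functional_extensionality_dep => t.
by rewrite /toreal h // inE.
Qed.

Lemma msg_det k (x y : Om) : (forall i, i \in Mk k -> x i = y i) -> msg k x = msg k y.
Proof. by move=> h; rewrite /msg /tmsg (local_eq h). Qed.

Lemma enc_eq k (x y : Om) : msg k x = msg k y ->
  enc sch k (local M k (toreal x)) = enc sch k (local M k (toreal y)).
Proof.
move=> h; have : tmsg k x = tmsg k y by apply/eqP; rewrite -msg_tmsg h.
move=> e; apply: boolp.functional_extensionality_dep => i.
by have := congr1 (fun f : {ffun _ -> bool} => f i) e; rewrite !ffunE.
Qed.

Lemma decode (A : {set 'I_K}) (k : 'I_K) (x y : Om) : k \in A ->
  (forall j, j \in A :\ k -> msg j x = msg j y) ->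
  (forall i, i \in Mk k :|: BS A -> x i = y i) ->
  forall i, i \in Wk k -> x i = y i.
Proof.
move=> kA hm hy.
have hl : local M k (toreal x) = local M k (toreal y).
  by apply: local_eq => i iM; apply: hy; rewrite inE iM.
have Henc : forall j, enc sch j (local M j (toreal x)) = enc sch j (local M j (toreal y)).
  move=> j; case: (boolP (j \in A)) => jA.
    case: (eqVneq j k) => [->|njk]; first by rewrite hl.
    by apply: enc_eq; apply: hm; rewrite !inE njk jA.
  congr (enc sch j); apply: local_eq => i iM; apply: hy.
  rewrite inE; apply/orP; right; apply/bigcupP; exists j => //; by rewrite inE iM.
have Hrec : received M sch k (toreal x) = received M sch k (toreal y).
  by apply: boolp.functional_extensionality_dep => j; rewrite /received Henc.
move=> [q n]; rewrite inE /= => qW; apply/ffunP => t.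
have := @Hdec k (toreal x) q n qW; have := @Hdec k (toreal y) q n qW.
rewrite -Hrec -hl => e1 e2.
have E : toreal x q n = toreal y q n by rewrite -e1 -e2.
exact: (congr1 (fun f : bits T => f t) E).
Qed.

Lemma card_proj (C : {set I}) (w : Om) :
  #|[set x : Om | proj C x == proj C w]| = ((2 ^ T) ^ #|~: C|)%N.
Proof.
have -> : #|[set x : Om | proj C x == proj C w]| =
    #|family (fun i : I => if i \in C then pred1 (w i) else predT)|.
  apply: eq_card => x; rewrite inE; apply/eqP/familyP => [h i|h].
    case: ifP => iC //; rewrite inE; apply/eqP; exact: (proj1 (projP C x w) h i iC).
  apply/projP => i iC; have := h i; rewrite iC inE => /eqP //.
rewrite card_family foldrE big_map big_enum /=.
rewrite (eq_bigr (fun i => if i \in ~: C then (2 ^ T)%N else 1%N)); last first.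
  move=> i _; rewrite inE; case: ifP => _ /=; first exact: card1.
  by rewrite card_ffun card_bool card_ord.
by rewrite -big_mkcond /= prod_nat_const.
Qed.

Lemma wc_proj (C : {set I}) (w : Om) : wc R (proj C) w = ((2 ^ T) ^ #|~: C|)%:R.
Proof.
rewrite -(card_proj C w) -sum1_card natr_sum big_mkcond /wc /=; apply: eq_bigr => x _.
by rewrite inE; case: eqP.
Qed.

Lemma Ls_proj (C : {set I}) :
  Ls R (proj C) = #|Om|%:R * ((T * #|~: C|)%N%:R * ln 2).
Proof.
rewrite /Ls (eq_bigr (fun _ => (T * #|~: C|)%N%:R * ln 2)); last first.
  move=> w _; rewrite wc_proj -expnM natrX lnXn // mulr_natl //.
rewrite sumr_const; exact: (esym (mulr_natl _ _)).
Qed.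

Lemma Hc_projW k (C : {set I}) :
  Hc R (proj (Wk k)) (proj C) = #|Om|%:R * ((T * #|Wk k :\: C|)%N%:R * ln 2).
Proof.
rewrite /Hc (@Ls_keq _ _ _ _ (J (proj (Wk k)) (proj C)) (proj (Wk k :|: C))); last first.
  apply: keqP => x y; rewrite JP !projP; split.
    by move=> [h1 h2] i; rewrite inE => /orP[/h1|/h2].
  by move=> h; split=> i iC; apply: h; rewrite inE iC ?orbT.
rewrite !Ls_proj.
have e : #|~: C| = (#|~: (Wk k :|: C)| + #|Wk k :\: C|)%N.
  rewrite -(cardsID (~: Wk k) (~: C)).
  have -> : ~: C :&: ~: Wk k = ~: (Wk k :|: C) by apply/setP => i; rewrite !inE negb_or andbC.
  by have -> : ~: C :\: ~: Wk k = Wk k :\: C by apply/setP => i; rewrite !inE negbK andbC.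
rewrite e mulnDr natrD; ring.
Qed.

Lemma Hc_keq2 {X Y Y' : eqType} (f : Om -> X) (g : Om -> Y) (g' : Om -> Y') :
  keq g g' -> Hc R f g = Hc R f g'.
Proof.
move=> h; apply: Hc_keq => // x y; by rewrite !keqJ h.
Qed.

Lemma BS_D1 (A : {set 'I_K}) k : k \in A -> BS (A :\ k) = Wk k :|: (Mk k :|: BS A).
Proof.
move=> kA; apply/setP => i; rewrite /BS.
rewrite (bigD1 k) /=; last by rewrite !inE eqxx.
rewrite (eq_bigl (fun j => j \notin A)); last first.
  by move=> j; rewrite !inE; case: (eqVneq j k) => [->|] /=; rewrite ?eqxx ?kA ?andbT.
rewrite !in_setU.
by case: (i \in Mk k); case: (i \in Wk k).
Qed.

Definition G (A : {set 'I_K}) := Hc R (XS A) (proj (BS A)).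

Lemma step1 (A : {set 'I_K}) k : k \in A ->
  G A = Hc R (msg k) (proj (BS A)) + Hc R (XS (A :\ k)) (J (msg k) (proj (BS A))).
Proof.
move=> kA; rewrite /G -Hc_chain; apply: Hc_keq => //.
apply: keqP => x y; rewrite !JP !XSP; split.
  move=> [h hy]; split => //; split; first exact: h.
  by move=> j; rewrite !inE => /andP[_ /h].
move=> [[hk h'] hy]; split => // j jA; case: (eqVneq j k) => [->//|njk].
by apply: h'; rewrite !inE njk jA.
Qed.

Lemma step2 (A : {set 'I_K}) k : k \in A ->
  #|Om|%:R * ((T * #|Wk k :\: (Mk k :|: BS A)|)%N%:R * ln 2) + G (A :\ k)
  <= Hc R (XS (A :\ k)) (J (msg k) (proj (BS A))).
Proof.
move=> kA.
apply: le_trans (@Hc_mono R _ _ _ _ (XS (A :\ k)) (J (msg k) (proj (BS A))) (proj (Mk k))).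
rewrite (@Hc_keq2 _ _ _ (XS (A :\ k)) _ (proj (Mk k :|: BS A))); last first.
  apply: keqP => x y; rewrite !JP !projP; split.
    by move=> [[_ h1] h2] i; rewrite in_setU => /orP[/h2|/h1].
  move=> h; split; last by move=> i iM; apply: h; rewrite in_setU iM.
  split; last by move=> i iB; apply: h; rewrite in_setU iB orbT.
  by apply: msg_det => i iM; apply: h; rewrite in_setU iM.
rewrite (@Hc_keq _ _ _ _ _ _ (XS (A :\ k)) (proj (Mk k :|: BS A))
            (J (proj (Wk k)) (XS (A :\ k))) (proj (Mk k :|: BS A))); last 2 first.
- apply: keqP => x y; rewrite !JP; split; last by move=> [[_ ?] ?].
  move=> [h1 h2]; split => //; split => //.
  apply/projP; apply: (decode kA); first by move/XSP: h1.
  by move/projP: h2.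
- by move=> x y.
rewrite Hc_chain Hc_projW lerD2l.
rewrite (@Hc_keq2 _ _ _ (XS (A :\ k)) _ (proj (BS (A :\ k)))) //.
rewrite (BS_D1 kA); apply: keqP => x y; rewrite !JP !projP; split.
  by move=> [h1 h2] i; rewrite in_setU => /orP[/h1|/h2].
move=> h; split => i iC; apply: h; rewrite in_setU iC ?orbT //.
Qed.

Definition cst : R := #|Om|%:R * (T%:R * ln 2).
Definition ck (A : {set 'I_K}) k := #|Wk k :\: (Mk k :|: BS A)|.

Lemma Grec (A : {set 'I_K}) :
  \sum_(k in A) (cst * (ck A k)%:R + G (A :\ k)) <= (#|A|%:R - 1) * G A.
Proof.
have E : #|A|%:R * G A = \sum_(k in A) (Hc R (msg k) (proj (BS A)) +
                                         Hc R (XS (A :\ k)) (J (msg k) (proj (BS A)))).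
  rewrite mulr_natl -sumr_const; apply: eq_bigr => k kA; exact: step1.
have sub : G A <= \sum_(k in A) Hc R (msg k) (proj (BS A)).
  rewrite /G -big_enum; exact: Hc_subadd.
have le2 : \sum_(k in A) (cst * (ck A k)%:R + G (A :\ k)) <=
           \sum_(k in A) Hc R (XS (A :\ k)) (J (msg k) (proj (BS A))).
  apply: ler_sum => k kA; apply: le_trans (step2 kA).
  by rewrite /cst /ck natrM le_eqVlt; apply/orP; left; apply/eqP; ring.
rewrite mulrBl mul1r E [X in _ <= X - _]big_split /=; lra.
Qed.

Lemma G_top : G setT <= #|Om|%:R * ((\sum_k len sch k)%N%:R * ln 2).
Proof.
rewrite /G; have -> : BS setT = set0 by rewrite /BS big_pred0 // => j; rewrite inE.
apply: le_trans (_ : \sum_(k in setT) Hc R (msg k) (proj set0) <= _).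
  rewrite -big_enum; exact: Hc_subadd.
have -> : \sum_(k in [set: 'I_K]) Hc R (msg k) (proj set0) = \sum_k Hc R (msg k) (proj set0) by apply: eq_bigl => k; rewrite inE.
rewrite natr_sum mulr_suml mulr_sumr; apply: ler_sum => k _.
rewrite (@Hc_keq _ _ _ _ _ _ (msg k) (proj set0) (tmsg k) (proj set0)); first last.
- by move=> x y.
- by move=> x y; rewrite !keqJ msg_tmsg.
apply: le_trans (@Hc_range R _ _ _ (tmsg k) (proj set0)) _.
have -> : #|{ffun 'I_(len sch k) -> bool}| = (2 ^ len sch k)%N by rewrite card_ffun card_bool card_ord.
by rewrite natrX lnXn // -[ln 2 *+ _]mulr_natl.
Qed.

Definition sA (i : I) := #|[set k : 'I_K | i.2 \in M k]|.
Definition dD (i : I) := #|[set k : 'I_K | (i.1 \in W k) && (i.2 \notin M k)]|.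
Definition wt (i : I) : R :=
  if (0 < sA i)%N && (0 < dD i)%N then (dD i)%:R / (sA i + dD i - 1)%N%:R else 0.
Definition phi (A : {set 'I_K}) := \sum_(i : I) (i \notin BS A)%:R * wt i.

Lemma wt_ge0 i : 0 <= wt i.
Proof. by rewrite /wt; case: ifP => // _; rewrite divr_ge0 ?ler0n. Qed.

Lemma inBS (A : {set 'I_K}) (i : I) j : j \notin A -> (i.2 \in M j) || (i.1 \in W j) -> i \in BS A.
Proof. by move=> jA h; apply/bigcupP; exists j => //; rewrite !inE. Qed.

Lemma phi_small (A : {set 'I_K}) : (#|A| <= 1)%N -> phi A = 0.
Proof.
move=> hA; apply: big1 => i _.
case: (boolP (i \in BS A)) => iB; first by rewrite mul0r.
rewrite /wt; case: ifP => [/andP[s0 d0]|]; last by rewrite mulr0.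
exfalso; move/card_gt0P: s0 => [a]; rewrite inE => ha.
move/card_gt0P: d0 => [d]; rewrite inE => /andP[hd1 hd2].
have aA : a \in A by apply/negPn/negP => aA; move: iB; rewrite (inBS aA) // ha.
have dA : d \in A by apply/negPn/negP => dA; move: iB; rewrite (inBS dA) // hd1 orbT.
have ad : a != d by apply/eqP => e; move: hd2; rewrite -e ha.
have : (#|[set a; d]| <= #|A|)%N by apply: subset_leq_card; apply/subsetP => x; rewrite !inE => /orP[/eqP->|/eqP->].
by rewrite cards2 ad; move=> h; move: (leq_trans h hA).
Qed.

Lemma sum_in (A : {set 'I_K}) (P : pred 'I_K) : (forall k, P k -> k \in A) ->
  \sum_(k in A) ((P k)%:R : R) = #|[set k | P k]|%:R.
Proof.
move=> h; rewrite -sum1_card natr_sum big_mkcond [RHS]big_mkcond /=.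
apply: eq_bigr => k _; rewrite inE.
by case: (boolP (P k)) => [/h -> //|_]; case: (k \in A).
Qed.

Lemma phi_rec (A : {set 'I_K}) :
  (#|A|%:R - 1) * phi A <= \sum_(k in A) ((ck A k)%:R + phi (A :\ k)).
Proof.
rewrite big_split /= mulr_sumr.
have C1 : \sum_(k in A) ((ck A k)%:R : R) =
    \sum_i \sum_(k in A) ((i \in Wk k :\: (Mk k :|: BS A))%:R : R).
  rewrite exchange_big /=; apply: eq_bigr => k _.
  rewrite /ck -sum1_card natr_sum big_mkcond /=; apply: eq_bigr => i _.
  by case: (_ \in _).
have C2 : \sum_(k in A) phi (A :\ k) =
    \sum_i \sum_(k in A) ((i \notin BS (A :\ k))%:R * wt i).
  by rewrite /phi exchange_big.
rewrite C1 C2 -big_split /=; apply: ler_sum => i _.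
case: (boolP (i \in BS A)) => iB.
  rewrite /= mul0r mulr0.
  by apply: addr_ge0; apply: sumr_ge0 => k _; rewrite ?mulr_ge0 ?ler0n ?wt_ge0.
rewrite mul1r.
rewrite (eq_bigr (fun k => (((i.1 \in W k) && (i.2 \notin M k))%:R : R))); last first.
  move=> k kA; rewrite /Wk /Mk !inE (negPf iB) !orbF.
  by rewrite andbC.
rewrite [X in _ <= _ + X](eq_bigr (fun k => (~~ ((i.2 \in M k) || (i.1 \in W k)))%:R * wt i)); last first.
  move=> k kA; rewrite (BS_D1 kA) /Wk /Mk !inE (negPf iB) !orbF.
  by rewrite orbC.
rewrite -mulr_suml.
have hA : forall k, (i.2 \in M k) || (i.1 \in W k) -> k \in A.
  by move=> k hk; apply/negPn/negP => kA; move: iB; rewrite (inBS kA hk).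
rewrite sum_in; last by move=> k /andP[h1 _]; apply: hA; rewrite h1 orbT.
rewrite (eq_bigr (fun k => 1 - (((i.2 \in M k) || (i.1 \in W k))%:R : R))); last first.
  by move=> k _; case: (_ || _); rewrite ?subrr ?subr0.
rewrite sumrB sum_in // sumr_const.
have eU : [set k | (i.2 \in M k) || (i.1 \in W k)] =
    [set k | i.2 \in M k] :|: [set k | (i.1 \in W k) && (i.2 \notin M k)].
  by apply/setP => k; rewrite !inE; case: (i.2 \in M k); rewrite /= ?andbT ?orbT.
have cU : #|[set k | (i.2 \in M k) || (i.1 \in W k)]| = (sA i + dD i)%N.
  rewrite eU /sA /dD -cardsUI.
  have -> : [set k | i.2 \in M k] :&: [set k | (i.1 \in W k) && (i.2 \notin M k)] = set0.
    by apply/setP => k; rewrite !inE; case: (i.2 \in M k); rewrite ?andbF.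
  by rewrite cards0 addn0.
rewrite cU -/(dD i) natrD.
rewrite /wt; case: ifP => [/andP[s0 d0]|_]; last by rewrite !mulr0 addr0 ler0n.
have hx : ((sA i + dD i - 1)%N%:R : R) = (sA i)%:R + (dD i)%:R - 1.
  by rewrite natrB ?natrD // addn_gt0 s0.
have s1 : (1:R) <= (sA i)%:R by rewrite ler1n.
have d1 : (1:R) <= (dD i)%:R by rewrite ler1n.
have x0 : (sA i)%:R + (dD i)%:R - 1 != 0 :> R by rewrite gt_eqF //; lra.
rewrite hx le_eqVlt; apply/orP; left; apply/eqP; field.
exact: x0.
Qed.

Lemma cst_ge0 : 0 <= cst.
Proof. by rewrite /cst mulr_ge0 ?mulr_ge0 ?ler0n // ln_ge0 // ler1n. Qed.

Lemma G_phi n (A : {set 'I_K}) : (#|A| <= n)%N -> cst * phi A <= G A.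
Proof.
elim: n A => [|n IH] A hA.
  by rewrite phi_small ?(leq_trans hA) // mulr0 Hc_ge0.
case: (leqP #|A| 1) => h1; first by rewrite phi_small // mulr0 Hc_ge0.
have a1 : (0 : R) < #|A|%:R - 1 by rewrite subr_gt0 ltr1n.
rewrite -(ler_pM2l a1); apply: le_trans (Grec A).
rewrite mulrCA; apply: le_trans (ler_wpM2l cst_ge0 (phi_rec A)) _.
rewrite mulr_sumr; apply: ler_sum => k kA; rewrite mulrDr lerD2l.
apply: IH; move: hA; rewrite (cardsD1 k A) kA add1n ltnS.
by [].
Qed.

Lemma core : T%:R * phi setT <= (\sum_k len sch k)%N%:R.
Proof.
have h := le_trans (G_phi (leqnn _)) G_top.
have Om0 : (0 : R) < #|Om|%:R.
  by rewrite ltr0n; apply/card_gt0P; exists [ffun=> [ffun=> false]].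
have l2 : (0 : R) < ln 2 by rewrite ln_gt0 // ltr1n.
have p : (0 : R) < #|Om|%:R * ln 2 by rewrite mulr_gt0.
rewrite -(ler_pM2l p).
move: h; rewrite /cst.
set o := (#|Om|%:R : R); set L := ln 2; set P := phi _; set S := ((\sum_k len sch k)%N%:R : R).
have e1 : o * L * (T%:R * P) = o * (T%:R * L) * P by ring.
have e2 : o * L * S = o * (S * L) by ring.
by rewrite e1 e2.
Qed.

End Setup.


Section Final.
Variables (K Q N : nat) (M : 'I_K -> {set 'I_N}) (W : 'I_K -> {set 'I_Q}).
Local Notation I := ('I_Q * 'I_N)%type.

Definition wtF (F : fieldType) (i : I) : F :=
  if (0 < sA M i)%N && (0 < dD M W i)%N then (dD M W i)%:R / (sA M i + dD M W i - 1)%N%:R else 0.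

Lemma sum_nat_eq (F : fieldType) (G : nat -> F) a b x :
  \sum_(a <= j < b) ((x == j)%:R * G j) = if (a <= x < b)%N then G x else 0.
Proof.
case: ifP => hx.
  rewrite (bigD1_seq x) ?mem_index_iota ?iota_uniq //= eqxx mul1r big1 ?addr0 //.
  by move=> j /negPf; rewrite eq_sym => ->; rewrite mul0r.
rewrite big_seq big1 // => j; rewrite mem_index_iota => hj.
by case: eqP => [e|_]; [move: hx; rewrite e hj | rewrite mul0r].
Qed.

Lemma sAdD i : (sA M i + dD M W i <= K)%N.
Proof.
rewrite /sA /dD -cardsUI.
have -> : [set k | i.2 \in M k] :&: [set k | (i.1 \in W k) && (i.2 \notin M k)] = set0.
  by apply/setP => k; rewrite !inE; case: (i.2 \in M k); rewrite ?andbF.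
rewrite cards0 addn0; apply: leq_trans (max_card _) _; by rewrite card_ord.
Qed.

Lemma sum_eq (F : fieldType) :
  \sum_(1 <= s < K.+1) \sum_(1 <= d < (K - s).+1)
     ((a_sd M W s d)%:R * d%:R / (s + d - 1)%N%:R) = \sum_(i : I) wtF F i.
Proof.
have e : forall s d, ((a_sd M W s d)%:R * d%:R / (s + d - 1)%N%:R : F) =
   \sum_(i : I) ((sA M i == s)%:R * ((dD M W i == d)%:R * (d%:R / (s + d - 1)%N%:R))).
  move=> s d; rewrite /a_sd -sum1_card natr_sum -mulrA mulr_suml big_mkcond /=.
  apply: eq_bigr => i _; rewrite inE /sA /dD.
  by case: eqP; case: eqP; rewrite ?mul0r ?mulr0 ?mul1r.
under eq_bigr => s _ do under eq_bigr => d _ do rewrite e.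
under eq_bigr => s _ do rewrite exchange_big /=.
rewrite exchange_big /=; apply: eq_bigr => i _.
under eq_bigr => s _ do rewrite -mulr_sumr sum_nat_eq.
rewrite sum_nat_eq /wtF.
have h := sAdD i.
have hs : (sA M i < K.+1)%N by rewrite ltnS (leq_trans _ h) // leq_addr.
have hd : forall s, s = sA M i -> (dD M W i < (K - s).+1)%N = true.
  by move=> s ->; rewrite ltnS leq_subRL // (leq_trans _ h) // leq_addr.
rewrite hs hd // andbT andbT.
by case: (0 < sA M i)%N; case: (0 < dD M W i)%N.
Qed.

End Final.

Lemma ratr_wtF (F : fieldType) (f : {rmorphism rat -> F}) K Q N (M : 'I_K -> {set 'I_N}) (W : 'I_K -> {set 'I_Q}) i :
  f (wtF M W rat i) = wtF M W F i.
Proof.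
rewrite /wtF; case: ifP => _; last exact: rmorph0.
by rewrite fmorph_div !rmorph_nat.
Qed.

Module RInst.
Import Rstruct.
Lemma core_rat (K Q N T : nat) (M : 'I_K -> {set 'I_N}) (W : 'I_K -> {set 'I_Q})
    (S : shuffle_scheme K Q N T)
    (dec : forall k : 'I_K, realization Q N T -> (forall k' : 'I_K, bits (len S k')) ->
       'I_Q -> 'I_N -> bits T)
    (Hdec : forall k v q n, q \in W k -> dec k (local M k v) (received M S k v) q n = v q n) :
  (T%:R * \sum_(i : 'I_Q * 'I_N) wtF M W rat i <= (\sum_k len S k)%N%:R :> rat).
Proof.
have c := @core Rdefinitions.R K Q N T M W S dec Hdec.
have eP : phi Rdefinitions.R M W setT = \sum_i wtF M W Rdefinitions.R i.
  rewrite /phi; have -> : BS M W setT = set0 by rewrite /BS big_pred0 // => j; rewrite inE.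
  by apply: eq_bigr => i _; rewrite inE /= mul1r.
rewrite eP in c.
rewrite -(ler_rat Rdefinitions.R) rmorphM rmorph_sum !rmorph_nat.
apply: le_trans c; rewrite le_eqVlt; apply/orP; left; apply/eqP; congr (_ * _); apply: eq_bigr => i _; exact: ratr_wtF.
Qed.
End RInst.

Unset Implicit Arguments. Set Strict Implicit.
Theorem lemma1 (R : realFieldType) (K Q N T : nat)
    (M : 'I_K -> {set 'I_N}) (W : 'I_K -> {set 'I_Q})
    (S : shuffle_scheme K Q N T) :
  (0 < Q)%N -> (0 < N)%N -> (0 < T)%N ->
  map_assignment M -> reduce_assignment W -> valid_scheme M W S ->
  (Q * N)%N%:R^-1 *
    \sum_(1 <= s < K.+1) \sum_(1 <= d < (K - s).+1)
       ((a_sd M W s d)%:R * d%:R / (s + d - 1)%N%:R)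
  <= @load R K Q N T S.
Proof.
move=> Q0 N0 T0 _ _ [dec Hdec].
rewrite (sum_eq M W R).
have Hrat := RInst.core_rat Hdec.
have HR : (T%:R * \sum_i wtF M W R i <= (\sum_k len S k)%N%:R :> R).
  move: Hrat; rewrite -(ler_rat R) rmorphM rmorph_sum !rmorph_nat.
  move=> h; apply: le_trans h; rewrite le_eqVlt; apply/orP; left; apply/eqP; congr (_ * _); apply: eq_bigr => i _; exact/esym/ratr_wtF.
rewrite /load.
have qnt : (0 : R) < (Q * N * T)%N%:R by rewrite ltr0n !muln_gt0 Q0 N0 T0.
rewrite -(ler_pM2r qnt) divfK ?gt_eqF //.
apply: le_trans HR; rewrite le_eqVlt; apply/orP; left; apply/eqP.
rewrite !natrM; field.
by rewrite !pnatr_eq0 -!lt0n Q0 N0.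
Qed.
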